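(* Let $w, w'$ be words over $\Omega$ of lengths $k > k'$. Then $h_w(n) - q^{k-k'} h_{w'}(n-k+k') \le 0$ for all integers $n \le k+1$.
   Context: Let $\Omega$ be a finite alphabet with $q\ge2$ letters; a word of length $k$ is written $w = w_k\dots w_1$. For any integer $n$, $h_w(n)$ is the number of strings of length $n$ over $\Omega$ whose last $k$ characters form $w$ and which contain $w$ as a block of $k$ consecutive characters nowhere else; in particular $h_w(n) = 0$ for all $n < k$ (including negative $n$) and $h_w(k)=1$. *)

(* Defs.v *)
From HB Require Import structures.
From mathcomp Require Import all_boot all_order all_algebra.
Set Implicit Arguments. Unset Strict Implicit. Unset Printing Implicit Defensive.
Import Order.TTheory GRing.Theory Num.Theory.

(* A word/string is a seq over the finite alphabet T, written left to right;
   the word w = w_k ... w_1 is the seq [:: w_k; ...; w_1].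
   [occurs_at w s i]: w appears in s as the block of size w consecutive
   characters starting at (0-based) position i. *)
Definition occurs_at (T : eqType) (w s : seq T) (i : nat) : bool :=
  (i + size w <= size s) && (take (size w) (drop i s) == w).

Definition ends_only_with (T : eqType) (w s : seq T) : bool :=
  occurs_at w s (size s - size w) &&
  [forall i : 'I_(size s).+1, occurs_at w s i ==> (val i == size s - size w)].

Definition h (T : finType) (w : seq T) (n : int) : nat :=
  match n with
  | Posz m => #|[set s : m.-tuple T | ends_only_with w s]|
  | Negz _ => 0
  end.

(* Main.v *)
Require Import Defs.
From HB Require Import structures.
From mathcomp Require Import all_boot all_order all_algebra.
From mathcomp Require Import zify.
Import Order.TTheory GRing.Theory Num.Theory.

Lemma L0 (T : finType) (w : seq T) (m : nat) : (m < size w)%N -> h w m = 0%N.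
Proof.
move=> hm; rewrite /h; apply/eqP; rewrite cards_eq0; apply/eqP/setP => s.
rewrite !inE /ends_only_with /occurs_at size_tuple.
have -> : (m - size w + size w <= m)%N = false by lia.
by [].
Qed.

Lemma L1 (T : finType) (w : seq T) : (h w (size w) <= 1)%N.
Proof.
rewrite /h -(cards1 (in_tuple w)); apply: subset_leq_card; apply/subsetP => s.
rewrite !inE /ends_only_with /occurs_at size_tuple subnn drop0 => /andP[/andP[_ /eqP e] _].
apply/eqP/val_inj => /=; rewrite take_oversize in e; first by []. by rewrite size_tuple.
Qed.

Lemma L2 (T : finType) (w : seq T) : (0 < h w (size w))%N.
Proof.
rewrite /h card_gt0; apply/set0Pn; exists (in_tuple w).
rewrite inE /ends_only_with /occurs_at /= subnn drop0 take_size eqxx leqnn /=.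
apply/forallP => i; apply/implyP => /andP[hi _]; apply/eqP; lia.
Qed.

Lemma L3 (T : finType) (w : seq T) : (h w (size w).+1 <= #|T|)%N.
Proof.
rewrite /h.
set A := [set s : (size w).+1.-tuple T | ends_only_with w s].
have inj : {in A &, injective (fun s : (size w).+1.-tuple T => thead s)}.
  move=> s1 s2; rewrite !inE /ends_only_with /occurs_at !size_tuple.
  have -> : ((size w).+1 - size w = 1)%N by lia.
  move=> /andP[/andP[_ /eqP e1] _] /andP[/andP[_ /eqP e2] _] hd.
  apply/val_inj; rewrite /= (tuple_eta s1) (tuple_eta s2) /= hd.
  congr (_ :: _).
  rewrite take_oversize in e1; last by rewrite size_drop size_tuple subn1.
  rewrite take_oversize in e2; last by rewrite size_drop size_tuple subn1.
  by move: e1 e2; rewrite !drop1 => -> ->.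
rewrite -(card_in_imset inj); exact: max_card.
Qed.

Lemma L4 (T : finType) (w : seq T) : (1 < #|T|)%N -> (0 < size w)%N ->
  (0 < h w (size w).+1)%N.
Proof.
case: w => [//|x t] hT _.
have : (0 < #|predC1 x|)%N by rewrite cardC1; lia.
case/card_gt0P => a; rewrite !inE => hax.
rewrite /h card_gt0; apply/set0Pn; exists (in_tuple (a :: x :: t)).
rewrite inE /ends_only_with /occurs_at /=.
have -> : ((size t).+2 - (size t).+1 = 1)%N by lia.
rewrite drop1 /= take_size eqxx leqnn /=.
apply/forallP => -[i hi] /=; apply/implyP => /andP[hi2 he].
case: i hi hi2 he => [|[|i]] //= _ hb.
  by rewrite take_cons => /eqP [e]; move: hax; rewrite e eqxx.
move: hb; rewrite /= !addSn ltnS; lia.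
Qed.

Local Open Scope ring_scope.

Theorem lemma5p1 (T : finType) (hq : (2 <= #|T|)%N) (w w' : seq T)
  (hw' : (0 < size w')%N) (hk : (size w' < size w)%N) (n : int)
  (hn : n <= (size w)%:Z + 1) :
  (h w n)%:Z - ((#|T| ^ (size w - size w'))%N)%:Z
      * (h w' (n - (size w)%:Z + (size w')%:Z))%:Z <= 0.
Proof.
rewrite subr_le0.
case: n hn => [m|m] hn; last by rewrite /= mulr_ge0.
case: (ltnP m (size w)) => hm.
  by rewrite L0 // mulr_ge0.
have e : (Posz m - (size w)%:Z + (size w')%:Z) = Posz (m - size w + size w')%N.
  rewrite -[X in _ = X]/(Posz _); lia.
rewrite e -PoszM lez_nat.
have hm2 : (m <= (size w).+1)%N by move: hn; rewrite -[1]/(Posz 1) -PoszD lez_nat addn1.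
have hp : (0 < #|T| ^ (size w - size w'))%N by rewrite expn_gt0; lia.
have : (m == size w) || (m == (size w).+1) by lia.
case/orP => /eqP ->.
- have -> : (size w - size w + size w' = size w')%N by lia.
  apply: leq_trans; first exact: L1. rewrite muln_gt0 hp; exact: L2.
- have -> : ((size w).+1 - size w + size w' = (size w').+1)%N by lia.
  apply: leq_trans; first exact: L3. apply: (@leq_trans (#|T| ^ (size w - size w'))).
    rewrite -{1}(expn1 #|T|) leq_exp2l //; lia.
  by rewrite leq_pmulr // L4.
Qed.
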